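(* Let $M$ be a nonnegative integer, $k=(k_\alpha)_{\alpha\in R^-}\in\mathbb N^{q-1}$ with $\sum_{\alpha\in R^-}\alpha\cdot k_\alpha=0$ in $R$, and $\Gamma$ a finite index set. Suppose that for each $\alpha\in R^-$ and $i\in\Gamma$ we are given nonnegative integers $x_i^{(\alpha)}$ such that $\sum_{i\in\Gamma}x_i^{(\alpha)}=k_\alpha M$ for all $\alpha\in R^-$ and $\sum_{\alpha\in R^-}x_i^{(\alpha)}\le M$ for all $i\in\Gamma$. Then there exist nonnegative integers $w_a$, $a\in\mathcal C_\Gamma^{(k)}$, such that $\sum_{a\in\mathcal C_\Gamma^{(k)}}w_a=M$ and, for all $\alpha\in R^-$ and $i\in\Gamma$, $x_i^{(\alpha)}=\sum_{a\in\mathcal C_\Gamma^{(k)},\,a_i=\alpha}w_a$.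
   Context: $R$ is a finite ring with $q$ elements, $R^-=R\setminus\{0\}$. For $\alpha\in R$ and $k\in\mathbb N$, $\alpha\cdot k$ denotes the $k$-fold sum $\alpha+\cdots+\alpha$ (equal to $0$ if $k=0$). For a finite index set $\Gamma$, $\mathcal C_\Gamma=\{a=(a_i)_{i\in\Gamma}\in R^\Gamma:\sum_{i\in\Gamma}a_i=0\}$, $\kappa_\Gamma(a)\in\mathbb N^{q-1}$ has coordinates $\kappa_\Gamma(a)_\alpha=|\{i\in\Gamma:a_i=\alpha\}|$ ($\alpha\in R^-$), and $\mathcal C_\Gamma^{(k)}=\{a\in\mathcal C_\Gamma:\kappa_\Gamma(a)=k\}$. *)

(* Defs.v *)
From mathcomp Require Import all_boot all_order all_algebra.
Set Implicit Arguments. Unset Strict Implicit. Unset Printing Implicit Defensive.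
Import GRing.Theory.
Local Open Scope ring_scope.

Definition CGamma (R : finPzRingType) (Gamma : finType) : {set {ffun Gamma -> R}} :=
  [set a : {ffun Gamma -> R} | \sum_(i : Gamma) a i == 0].

Definition kappa (R : finPzRingType) (Gamma : finType) (a : {ffun Gamma -> R}) (alpha : R) : nat :=
  #|[set i : Gamma | a i == alpha]|.

(* C_Gamma^(k) for k indexed by R^- (values of k at 0 are irrelevant). *)
Definition CGammak (R : finPzRingType) (Gamma : finType) (k : R -> nat)
  : {set {ffun Gamma -> R}} :=
  [set a in CGamma R Gamma | [forall alpha : R, (alpha != 0) ==> (kappa a alpha == k alpha)]].

(* Main.v *)
Require Import Defs.
From mathcomp Require Import all_boot all_order all_algebra.
From mathcomp Require Import zify.
Import GRing.Theory.
Set Implicit Arguments. Unset Strict Implicit. Unset Printing Implicit Defensive.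

Section Hall.
Variables (T U : finType) (adj : T -> U -> bool) (u0 : U).

Definition nbr (S : {set T}) : {set U} := [set u | [exists i in S, adj i u]].

Lemma nbrP (S : {set T}) u : reflect (exists2 i, i \in S & adj i u) (u \in nbr S).
Proof. rewrite inE; apply: (iffP existsP) => [[i /andP[]]|[i H1 H2]]; [by exists i|by exists i; rewrite H1]. Qed.

Lemma sum_pos (X : {set U}) (c : U -> nat) : 0 < \sum_(u in X) c u ->
  exists2 u, u \in X & 0 < c u.
Proof.
move=> H; case: (pickP [pred u | (u \in X) && (0 < c u)]) => [u /andP[] *|none]; first by exists u.
move: H; rewrite big1 // => u uX; move: (none u); rewrite /= uX /=; by case: (c u).
Qed.

Lemma hall n : forall (A : {set T}) (cap : U -> nat), #|A| <= n ->
  (forall S : {set T}, S \subset A -> #|S| <= \sum_(u in nbr S) cap u) ->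
  exists f : T -> U, (forall i, i \in A -> adj i (f i)) /\
    (forall u, #|[set i in A | f i == u]| <= cap u).
Proof.
elim: n => [|n IH] A cap hA hH.
  exists (fun _ => u0); split => [i iA|u].
    by move: hA; rewrite leqn0 => /eqP/cards0_eq hA; rewrite hA inE in iA.
  by move: hA; rewrite leqn0 => /eqP/cards0_eq ->; rewrite (_ : [set _ in _ | _] = set0) ?cards0 //; apply/setP => i; rewrite !inE.
case: (boolP [exists S0 : {set T}, [&& S0 \subset A, S0 != set0, S0 != A &
   \sum_(u in nbr S0) cap u <= #|S0| ]]).
  case/existsP => S0 /and4P [sA n0 nA tight].
  have lt1 : #|S0| <= n.
    have := proper_card (_ : S0 \proper A); rewrite properEneq nA sA => /(_ isT); lia.
  have [f1 [f1a f1c]] := IH S0 cap lt1 (fun S sS => hH S (subset_trans sS sA)).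
  pose cap2 u := if u \in nbr S0 then 0 else cap u.
  have lt2 : #|A :\: S0| <= n.
    rewrite cardsD (setIidPr sA); move: n0; rewrite -card_gt0; lia.
  have sumcap2 : forall X : {set U}, \sum_(u in X) cap2 u = \sum_(u in X :\: nbr S0) cap u.
    move=> X; rewrite (big_setID (nbr S0)) /= big1 ?add0n; last first.
      by move=> u; rewrite inE /cap2 => /andP[_ ->].
    by apply: eq_bigr => u; rewrite inE /cap2 => /andP[/negbTE -> _].
  have [f2 [f2a f2c]] : exists f : T -> U, (forall i, i \in A :\: S0 -> adj i (f i)) /\
    (forall u, #|[set i in A :\: S0 | f i == u]| <= cap2 u).
    apply: IH lt2 _ => S sS.
    rewrite sumcap2.
    have dS : [disjoint S & S0].
      by apply/pred0P => i /=; apply/negP => /andP[/(subsetP sS)]; rewrite inE => /andP[/negbTE ->].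
    have := hH (S :|: S0) _; rewrite subUset sA (subset_trans sS (subsetDl _ _)) => /(_ isT).
    rewrite cardsU (disjoint_setI0 dS) cards0 subn0.
    have -> : nbr (S :|: S0) = nbr S :|: nbr S0.
      apply/setP => u; apply/idP/idP.
        by case/nbrP=> i; rewrite in_setU => /orP[] iS ai; rewrite in_setU; apply/orP; [left|right]; apply/nbrP; exists i.
      by rewrite in_setU => /orP[] /nbrP [i iS ai]; apply/nbrP; exists i; rewrite // in_setU iS ?orbT.
    rewrite (big_setID (nbr S0)) /= setIC setKU setDUl setDv setU0. lia.
  exists (fun i => if i \in S0 then f1 i else f2 i); split.
    move=> i iA; case: ifP => iS; [exact: f1a| apply: f2a; by rewrite inE iS].
  move=> u; set X := [set i in A | _].
  rewrite -(cardsID S0 X).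
  have -> : X :&: S0 = [set i in S0 | f1 i == u].
    apply/setP => i; rewrite !inE; case: (boolP (i \in S0)) => iS; rewrite ?andbF ?andbT //.
    by rewrite (subsetP sA).
  have -> : X :\: S0 = [set i in A :\: S0 | f2 i == u].
    apply/setP => i; rewrite !inE; case: (boolP (i \in S0)) => iS //=; by rewrite andbF.
  have := f1c u; have := f2c u; rewrite /cap2.
  case: ifP => uN; first lia.
  suff -> : #|[set i in S0 | f1 i == u]| = 0 by lia.
  apply/eqP; rewrite cards_eq0; apply/eqP/setP => i; rewrite !inE.
  apply/negP => /andP[iS /eqP fi]; move/negbT: uN => /nbrP; apply; exists i => //.
  by rewrite -fi f1a.
rewrite negb_exists => /forallP hno.
case: (boolP (A == set0)) => [/eqP A0|].
  exists (fun _ => u0); split => [i|u]; rewrite A0 ?inE //.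
  by rewrite (_ : [set _ in _ | _] = set0) ?cards0 //; apply/setP => i; rewrite !inE.
case/set0Pn => a aA.
have := hH [set a]; rewrite sub1set aA cards1 => /(_ isT) /sum_pos [b /nbrP [a' ] ].
rewrite inE => /eqP -> ab capb.
pose cap' u := if u == b then (cap u).-1 else cap u.
have hA' : #|A :\ a| <= n by move: hA; rewrite (cardsD1 a A) aA; lia.
have [f [fa fc]] : exists f : T -> U, (forall i, i \in A :\ a -> adj i (f i)) /\
    (forall u, #|[set i in A :\ a | f i == u]| <= cap' u).
  apply: IH hA' _ => S sS.
  case: (boolP (S == set0)) => [/eqP -> |Sn0]; first by rewrite cards0.
  have sSA : S \subset A by apply: subset_trans sS (subD1set _ _).
  have : ~~ (\sum_(u in nbr S) cap u <= #|S|).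
    have := hno S; rewrite sSA Sn0 /=; case: (S =P A) => // SA.
    by move: sS; rewrite SA => /subsetP /(_ a aA); rewrite !inE eqxx.
  rewrite -ltnNge.
  suff : \sum_(u in nbr S) cap u <= \sum_(u in nbr S) cap' u + 1 by lia.
  case: (boolP (b \in nbr S)) => bN.
    rewrite (bigD1 b bN) (bigD1 b bN) /= /cap' eqxx.
    rewrite [\sum_(i | _) (if _ then _ else _)](eq_bigr cap); first lia.
    by move=> u /andP[_ /negbTE ->].
  rewrite (eq_bigr cap') ?leq_addr // => u uN; rewrite /cap'; case: eqP => // ub.
  by move: bN; rewrite -ub uN.
exists (fun i => if i == a then b else f i); split.
  move=> i iA; case: eqP => [->//|/eqP ia]; apply: fa; by rewrite !inE ia.
move=> u; have := fc u; rewrite /cap'.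
case: eqP => [ub|nub] Hc.
  rewrite (cardsD1 a [set i in A | _]) inE aA eqxx ub eqxx /=.
  rewrite (_ : _ :\ a = [set i in A :\ a | f i == b]); first by move: Hc; rewrite ub; lia.
  apply/setP => i; rewrite !inE; case: eqP => //=.
move: Hc; rewrite (_ : [set i in A | _] = [set i in A :\ a | f i == u]) //.
apply/setP => i; rewrite !inE; case: (i =P a) => [->|_] /=; last by [].
rewrite aA /=; apply/eqP => bu; by case: nub.
Qed.
End Hall.


Lemma sum_card (T : finType) (P : pred T) : (\sum_i (P i : nat) = #|[set i | P i]|)%N.
Proof. rewrite -sum1_card [RHS]big_mkcond /=; apply: eq_bigr => i _; rewrite inE; by case: (P i). Qed.

Lemma sum_eq_le (T : finType) (a b : T -> nat) :
  (\sum_c a c = \sum_c b c)%N -> (forall c, a c <= b c)%N -> forall c, a c = b c.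
Proof.
move=> hs hle c; apply/eqP; rewrite eqn_leq hle /= leqNgt; apply/negP => lt.
move: hs; rewrite (bigD1 c) // [RHS](bigD1 c) //=.
have : (\sum_(i | i != c) a i <= \sum_(i | i != c) b i)%N by apply: leq_sum.
lia.
Qed.

Local Open Scope ring_scope.

Lemma main_ind (R : finPzRingType) (Gamma : finType) (k : R -> nat)
  (hk : \sum_(alpha : R | alpha != 0) alpha *+ k alpha = 0) (M : nat) :
  forall (x : R -> Gamma -> nat),
  (forall alpha : R, alpha != 0 -> (\sum_(i : Gamma) x alpha i = k alpha * M)%N) ->
  (forall i : Gamma, (\sum_(alpha : R | alpha != 0%R) x alpha i <= M)%N) ->
  exists w : {ffun Gamma -> R} -> nat,
    (\sum_(a in CGammak Gamma k) w a = M)%N /\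
    forall (alpha : R) (i : Gamma), alpha != 0 ->
      x alpha i = (\sum_(a in CGammak Gamma k | a i == alpha :> R) w a)%N.
Proof.
elim: M => [|M IH] x hcol hrow.
  exists (fun _ => 0%N); split; first by rewrite big1.
  move=> alpha i an; rewrite big1 //; have := hcol alpha an; rewrite muln0.
  move/eqP; rewrite (bigD1 i) //= addn_eq0 => /andP[/eqP -> _] //.
pose S := (\sum_(c | c != 0%R) k c)%N.
have hS : (S <= #|Gamma|)%N.
  rewrite -(leq_pmul2r (ltn0Sn M)) -sum_nat_const /S big_distrl /=.
  rewrite (eq_bigr (fun c => \sum_i x c i)%N); last by move=> c cn; rewrite hcol.
  rewrite exchange_big /=; exact: leq_sum.
pose cap (c : R) := if c == 0%R then (#|Gamma| - S)%N else k c.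
pose adj (i : Gamma) (c : R) := if c == 0%R then (\sum_(a | a != 0%R) x a i < M.+1)%N else (0 < x c i)%N.
pose y (c : R) (i : Gamma) := if c == 0%R then (M.+1 - \sum_(a | a != 0%R) x a i)%N else x c i.
have y_row : forall i, (\sum_c y c i = M.+1)%N.
  move=> i; rewrite (bigD1 0) //= /y eqxx.
  rewrite (eq_bigr (fun c => x c i)); last by move=> c /negbTE ->.
  by rewrite subnK ?hrow.
have y_col : forall c, (\sum_i y c i = cap c * M.+1)%N.
  move=> c; rewrite /y /cap; case: eqP => [_|/eqP cn]; last exact: hcol.
  have e : (\sum_i (M.+1 - \sum_(a | a != 0%R) x a i) + \sum_i \sum_(a | a != 0%R) x a i
     = #|Gamma| * M.+1)%N.
    rewrite -big_split /= -sum_nat_const; apply: eq_bigr => i _; by rewrite subnK ?hrow.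
  have e2 : (\sum_i \sum_(a | a != 0%R) x a i = S * M.+1)%N.
    rewrite exchange_big /S big_distrl /=; apply: eq_bigr => d dn; exact: hcol.
  rewrite mulnBl; move: e; rewrite e2; lia.
have hall_cond : forall S' : {set Gamma}, S' \subset [set: Gamma] ->
    (#|S'| <= \sum_(u in nbr adj S') cap u)%N.
  move=> S' _; rewrite -(leq_pmul2r (ltn0Sn M)) big_distrl /=.
  rewrite -sum_nat_const (eq_bigr (fun i => \sum_c y c i)); last by move=> i _; rewrite y_row.
  rewrite exchange_big /= (bigID (mem (nbr adj S'))) /= [X in (_ + X)%N]big1 ?addn0; last first.
    move=> c cN; apply: big1 => i iS; rewrite /y.
    have nai : ~~ adj i c by apply: contra cN => aic; apply/nbrP; exists i.
    move: nai; rewrite /adj; case: (c == 0%R); lia.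
  apply: leq_sum => c _; rewrite -y_col [X in (_ <= X)%N](bigID (mem S')) /=; exact: leq_addr.
have [f [fa fc]] := @hall _ _ adj 0 _ [set: Gamma] cap (leqnn _) hall_cond.
have cnt_le : forall c, (#|[set i | f i == c]| <= cap c)%N.
  move=> c; have := fc c; congr (_ <= _)%N; apply: eq_card => i; by rewrite !inE.
have sum_cnt : (\sum_c #|[set i | f i == c]| = \sum_c cap c)%N.
  rewrite (eq_bigr (fun c => \sum_i (f i == c : nat))%N); last by move=> c _; rewrite sum_card.
  rewrite exchange_big /= (bigD1 0) //= /cap eqxx.
  rewrite (eq_bigr k); last by move=> c /negbTE ->.
  rewrite -/S subnK // -sum1_card; apply: eq_bigr => i _; rewrite (bigD1 (f i)) //= eqxx big1 //.
  by move=> c /negbTE; rewrite eq_sym => ->.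
have cnt_eq := sum_eq_le sum_cnt cnt_le.
pose a0 := [ffun i => f i].
have a0C : a0 \in CGammak Gamma k.
  rewrite inE; apply/andP; split.
    rewrite inE; apply/eqP.
    rewrite (eq_bigr (fun i => \sum_c (if c == f i then c else 0))); last first.
      by move=> i _; rewrite -big_mkcond big_pred1_eq ffunE.
    rewrite exchange_big /=.
    rewrite (eq_bigr (fun c => c *+ cap c)); last first.
      move=> c _; rewrite -cnt_eq -sumr_const -big_mkcond; apply: eq_bigl => i; by rewrite inE eq_sym.
    rewrite (bigD1 0) //= mul0rn add0r -[X in _ = X]hk; apply: eq_bigr => c /negbTE cn; by rewrite /cap cn.
  apply/forallP => c; apply/implyP => cn; rewrite /kappa.
  have := cnt_eq c; rewrite /cap (negbTE cn) => <-; apply/eqP; apply: eq_card => i; by rewrite !inE ffunE.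
pose x' c i := (x c i - (f i == c))%N.
have ex : forall c i, c != 0 -> x c i = (x' c i + (f i == c))%N.
  move=> c i cn; rewrite /x'; case: (f i =P c) => [e|_]; last by rewrite subn0 addn0.
  have := fa i (in_setT i); rewrite /adj e (negbTE cn); lia.
have [w' [w'1 w'2]] : exists w : {ffun Gamma -> R} -> nat,
    (\sum_(a in CGammak Gamma k) w a = M)%N /\
    forall (alpha : R) (i : Gamma), alpha != 0 ->
      x' alpha i = (\sum_(a in CGammak Gamma k | a i == alpha :> R) w a)%N.
  apply: IH.
    move=> c cn; have := hcol c cn.
    rewrite (eq_bigr (fun i => x' c i + (f i == c))%N); last by move=> i _; rewrite -ex.
    rewrite big_split /= sum_card; have := cnt_eq c; rewrite /cap (negbTE cn) => ->; rewrite mulnS; lia.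
  move=> i.
  have hx : (\sum_(c | c != 0%R) x c i = \sum_(c | c != 0%R) x' c i + \sum_(c | c != 0%R) (f i == c))%N.
    by rewrite -big_split; apply: eq_bigr => c cn; exact: ex.
  case: (f i =P 0) => [e|ne].
    have := fa i (in_setT i); rewrite /adj e eqxx hx [X in (_ + X)%N]big1; first by rewrite addn0 ltnS.
    by move=> c cn; rewrite e eq_sym (negbTE cn).
  have := hrow i; rewrite hx [X in (_ + X)%N](bigD1 (f i)) /=; last by apply/eqP.
  rewrite eqxx [\sum_(i0 | _ && _) _]big1; first by rewrite addn0 addn1 ltnS.
  by move=> c /andP[_ /negbTE]; rewrite eq_sym => ->.
exists (fun a => w' a + (a == a0))%N; split.
  rewrite big_split /= w'1 (bigD1 a0) //= eqxx big1 ?addn0 ?addn1 //.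
  by move=> a /andP[_ /negbTE ->].
move=> c i cn; rewrite ex // big_split /= -w'2 //; congr (_ + _)%N.
case: (f i =P c) => [e|ne].
  rewrite (bigD1 a0) /=; last by rewrite a0C ffunE e eqxx.
  by rewrite eqxx big1 // => a /andP[_ /negbTE ->].
rewrite big1 // => a /andP[_ ai]; case: eqP => // e; case: ne; by rewrite -(eqP ai) e ffunE.
Qed.

Theorem proposition3 (R : finPzRingType) (Gamma : finType) (M : nat) (k : R -> nat)
  (x : R -> Gamma -> nat)
  (hk : \sum_(alpha : R | alpha != 0) alpha *+ k alpha = 0)
  (hcol : forall alpha : R, alpha != 0 -> (\sum_(i : Gamma) x alpha i = k alpha * M)%N)
  (hrow : forall i : Gamma, (\sum_(alpha : R | alpha != 0%R) x alpha i <= M)%N) :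
  exists w : {ffun Gamma -> R} -> nat,
    (\sum_(a in CGammak Gamma k) w a = M)%N /\
    forall (alpha : R) (i : Gamma), alpha != 0 ->
      x alpha i = (\sum_(a in CGammak Gamma k | a i == alpha :> R) w a)%N.
Proof. exact: main_ind. Qed.
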